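(* Let $a\ge 3$ be an integer and let $\mathcal{E}$ be the equation $x+y=az$. Then there is a constant $C_a$ (depending only on $a$) such that for all positive integers $n$: (i) if $a\in\{3,5\}$, then $M_{\mathcal{E}}(n)\le \dfrac{n^2}{4a^2}+C_a n$; (ii) if $a=4$ or $a\ge 6$, then $M_{\mathcal{E}}(n)\le \dfrac{8(2a-1)n^2}{a^4(4+a)}+C_a n$.
   Context: For a positive integer $n$ write $[n]=\{1,\dots,n\}$. A $k$-coloring of $[n]$ is a map $\chi:[n]\to\{0,\dots,k-1\}$. A solution to a 3-variable equation $\mathcal{E}$ in $[n]$ is an ordered triple $(x,y,z)\in[n]^3$ satisfying $\mathcal{E}$; it is monochromatic under $\chi$ if $\chi(x)=\chi(y)=\chi(z)$. $\mu_\chi(\mathcal{E},n,k)$ is the number of monochromatic solutions under $\chi$, $M_{\mathcal{E}}(n,k)=\min_\chi \mu_\chi(\mathcal{E},n,k)$ over all $k$-colorings $\chi$ of $[n]$, and $M_{\mathcal{E}}(n)=M_{\mathcal{E}}(n,2)$. *)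

(* Defs.v *)
From mathcomp Require Import all_boot all_order all_algebra.
Set Implicit Arguments. Unset Strict Implicit. Unset Printing Implicit Defensive.

(* [n] = {1,...,n} is represented by 'I_n via i |-> i+1.
   A 2-coloring of [n] is chi : {ffun 'I_n -> bool}. *)

Definition sol_xyaz (a n : nat) (x y z : 'I_n) : bool :=
  (x.+1 + y.+1 == a * z.+1)%N.

Definition mu_xyaz (a n : nat) (chi : {ffun 'I_n -> bool}) : nat :=
  #|[set t : 'I_n * 'I_n * 'I_n |
      sol_xyaz a t.1.1 t.1.2 t.2 && (chi t.1.1 == chi t.1.2) && (chi t.1.2 == chi t.2)]|.

Definition M_xyaz (a n : nat) : nat :=
  \big[minn/@mu_xyaz a n [ffun=> false]]_(chi : {ffun 'I_n -> bool}) mu_xyaz a chi.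

(* Main.v *)
Require Import Defs.
From mathcomp Require Import all_boot all_order all_algebra.
Import Order.TTheory GRing.Theory Num.Theory.
From mathcomp Require Import zify ring lra.
Set Implicit Arguments. Unset Strict Implicit. Unset Printing Implicit Defensive.


Lemma winG a c lo hi K : 0 < a ->
  \sum_(v < K) ([&& lo <= v, v < hi & a %| c + v.+1] : nat) =
  (c + maxn lo (minn K hi)) %/ a - (c + lo) %/ a.
Proof.
move=> a0; elim: K => [|K IH].
  by rewrite big_ord0 (_ : maxn lo (minn 0 hi) = lo) ?subnn //; lia.
rewrite big_ord_recr /= IH.
case H1: (lo <= K); case H2: (K < hi) => /=.
- rewrite (_ : maxn lo (minn K hi) = K); last by lia.
  rewrite (_ : maxn lo (minn K.+1 hi) = K.+1); last by lia.
  rewrite addnS divnS //.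
  have := leq_div2r a (_ : c + lo <= c + K); lia.
- rewrite addn0; congr (_ %/ _ - _); lia.
- rewrite addn0; congr (_ %/ _ - _); lia.
- rewrite addn0; congr (_ %/ _ - _); lia.
Qed.

Lemma winB a c lo hi K : 0 < a ->
  a * \sum_(v < K) ([&& lo <= v, v < hi & a %| c + v.+1] : nat) <= (hi - lo) + a.
Proof.
move=> a0; rewrite winG //.
set t := maxn lo (minn K hi).
have ht : t - lo <= hi - lo by rewrite /t; lia.
have h1 := leq_divM (c + t) a.
have h2 := ltn_ceil (c + lo) a0.
rewrite mulnBr.
rewrite mulSn in h2.
nia.
Qed.


Lemma mu_le a n (col : nat -> bool) K (psi phi : nat -> nat) (Q : nat -> nat -> bool) :
  0 < a ->
  (forall X Y Z, 0 < X <= n -> 0 < Y <= n -> 0 < Z <= n -> X + Y = a * Z ->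
     col X = col Y -> col Y = col Z ->
     [/\ psi X <= K, psi Y <= K, phi (psi X) = X, phi (psi Y) = Y & Q (psi X) (psi Y)]) ->
  mu_xyaz a [ffun x : 'I_n => col x.+1] <= \sum_(u < K.+1) \sum_(v < K.+1) (Q u v : nat).
Proof.
move=> a0 H; rewrite /mu_xyaz.
set S := [set t : 'I_n * 'I_n * 'I_n | _].
pose f (t : 'I_n * 'I_n * 'I_n) : 'I_K.+1 * 'I_K.+1 :=
  (inord (psi t.1.1.+1), inord (psi t.1.2.+1)).
have HS : forall t, t \in S -> [/\ psi t.1.1.+1 <= K, psi t.1.2.+1 <= K,
   phi (psi t.1.1.+1) = t.1.1.+1, phi (psi t.1.2.+1) = t.1.2.+1 &
   Q (psi t.1.1.+1) (psi t.1.2.+1)] /\ t.1.1.+1 + t.1.2.+1 = a * t.2.+1.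
  move=> [[x y] z]; rewrite inE /sol_xyaz /= !ffunE => /andP[/andP[/eqP e1 /eqP e2] /eqP e3].
  split => //; apply: (H _ _ z.+1) => //; rewrite ?ltn_ord //.
have finj : {in S &, injective f}.
  move=> t1 t2 /HS [[b1 b2 p1 p2 _] s1] /HS [[c1 c2 q1 q2 _] s2] [] e1 e2.
  move: e1 e2; move/(congr1 val); rewrite /= !inordK // => e1.
  move/(congr1 val); rewrite /= !inordK // => e2.
  have ex : t1.1.1 = t2.1.1 :> nat by apply: succn_inj; rewrite -p1 -q1 e1.
  have ey : t1.1.2 = t2.1.2 :> nat by apply: succn_inj; rewrite -p2 -q2 e2.
  have ez : t1.2 = t2.2 :> nat.
    apply: succn_inj; apply/eqP; rewrite -(eqn_pmul2l a0) -s1 -s2 ex ey //.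
  move: t1 t2 ex ey ez {s1 s2 p1 p2 q1 q2 b1 b2 c1 c2 e1 e2} => [[x1 y1] z1] [[x2 y2] z2] /= ex ey ez.
  by rewrite (val_inj ex) (val_inj ey) (val_inj ez).
rewrite -(card_in_imset finj).
have sub : f @: S \subset [set p : 'I_K.+1 * 'I_K.+1 | Q p.1 p.2].
  apply/subsetP => p /imsetP [t /HS [[b1 b2 _ _ hq] _] ->]; rewrite inE /= !inordK //.
apply: leq_trans (subset_leq_card sub) _.
rewrite -sum1_card pair_big /= big_mkcond /=.
apply: leq_sum => p _; rewrite inE; by case: (Q _ _).
Qed.


Lemma foldmin_le (I : eqType) (r : seq I) (F : I -> nat) x0 i :
  i \in r -> \big[minn/x0]_(j <- r) F j <= F i.
Proof.
elim: r => [//|j r IH]; rewrite inE big_cons => /orP[/eqP->|/IH h].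
  exact: geq_minl.
exact: leq_trans (geq_minr _ _) h.
Qed.

Lemma M_le a n (chi : {ffun 'I_n -> bool}) : M_xyaz a n <= mu_xyaz a chi.
Proof. by rewrite /M_xyaz; apply: foldmin_le; rewrite mem_index_enum. Qed.


Lemma sum_gate K lo hi (F : nat -> nat) :
  \sum_(u < K) ((lo <= u < hi) * F u) <= \sum_(lo <= u < hi) F u.
Proof.
have E : \sum_(u < K) ((lo <= u < hi) * F u) = \sum_(lo <= u < maxn lo (minn K hi)) F u.
  elim: K => [|K IH].
    by rewrite big_ord0 (_ : maxn lo (minn 0 hi) = lo) ?big_geq //; lia.
  rewrite big_ord_recr /= IH.
  case H1: (lo <= K); case H2: (K < hi) => /=; rewrite ?mul0n ?addn0 ?mul1n.
  - rewrite (_ : maxn lo (minn K hi) = K); last by lia.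
    rewrite (_ : maxn lo (minn K.+1 hi) = K.+1); last by lia.
    by rewrite big_nat_recr.
  - by congr (\sum_(lo <= u < _) _); lia.
  - by congr (\sum_(lo <= u < _) _); lia.
  - by congr (\sum_(lo <= u < _) _); lia.
rewrite E; set t := maxn lo (minn K hi).
case: (leqP hi lo) => Hhl.
  by rewrite (_ : t = lo) ?big_geq //; rewrite /t; lia.
have [Hlt Hth] : lo <= t /\ t <= hi by rewrite /t; lia.
by rewrite (big_cat_nat Hlt Hth) /= leq_addr.
Qed.

Lemma sumT1 h d : 2 * \sum_(0 <= u < h) (u.+1 - d) = (h - d) * (h - d).+1.
Proof.
elim: h => [|h IH]; first by rewrite big_geq //; lia.
rewrite big_nat_recr //=.
move: IH; set s := \sum_(0 <= u < h) _ => IH.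

nia.
Qed.

Lemma sumT2 k d : k <= d -> 2 * \sum_(0 <= u < k) (d - u.+1) + k * k + k = 2 * d * k.
Proof.
elim: k => [|k IH] H; first by rewrite big_geq //; lia.
rewrite big_nat_recr //= mulnDr.
have := IH (ltnW H).
nia.
Qed.


Definition W a lo hi c v := [&& lo <= v, v < hi & a %| c + v.+1].

Definition QB a k h u v :=
  [|| (0 <= u < k) && W a 0 k u.+1 v,
      (0 <= u < k) && W a h (a*k - u.+1) u.+1 v,
      (0 <= v < k) && W a h (a*k - v.+1) v.+1 u |
      (k <= u < h) && W a (maxn k (a*k - u.+1)) h u.+1 v].

Lemma block_Q a k h N x y Z : 0 < a -> a*h = 2*N -> a*k <= 2*h ->
  x < N -> y < N -> x.+1 + y.+1 = a * Z ->
  (x < k) || (h <= x) = (y < k) || (h <= y) ->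
  (y < k) || (h <= y) = (Z <= k) || (h < Z) ->
  QB a k h x y.
Proof.
move=> a0 eh ek hx hy e c1 c2.
have dv : a %| x.+1 + y.+1 by rewrite e dvdn_mulr.
have dv' : a %| y.+1 + x.+1 by rewrite addnC.
rewrite /QB /W dv dv' !andbT.
have [hz|hz] := boolP (Z <= k).
  have hZ : a * Z <= a * k by rewrite leq_mul2l hz orbT.
  rewrite hz /= in c2.
  have [hyk|hyk] := boolP (y < k).
    have [hxk|hxk] := boolP (x < k).
      by [].
    rewrite (negbTE hxk) hyk /= in c1.
    have h2 : x < a * k - y.+1 by lia.
    by rewrite ?c1 ?h2 ?orbT ?andbT.
  rewrite (negbTE hyk) /= in c2.
  have [hxk|hxk] := boolP (x < k).
    have h2 : y < a * k - x.+1 by lia.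
    by rewrite ?c2 ?h2 ?orbT ?andbT.
  rewrite (negbTE hxk) (negbTE hyk) /= in c1.
  exfalso; lia.
have [hz2|hz2] := boolP (h < Z).
  have : a * h < a * Z by rewrite ltn_pmul2l.
  lia.
have hZ : a * k < a * Z by rewrite ltn_pmul2l //; lia.
rewrite (negbTE hz) (negbTE hz2) /= in c2.
rewrite c2 in c1.
move/negbT/norP: c2 => [hy1 hy2]; move/negbT/norP: c1 => [hx1 hx2].
rewrite -leqNgt in hy1; rewrite -ltnNge in hy2; rewrite -leqNgt in hx1; rewrite -ltnNge in hx2.
have h4 : maxn k (a * k - x.+1) <= y by lia.
by rewrite ?hx1 ?hx2 ?hy2 ?h4 ?orbT ?andbT.
Qed.


Lemma piece a K glo ghi (wlo whi c : nat -> nat) : 0 < a ->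
  a * (\sum_(u < K) \sum_(v < K) ((glo <= u < ghi) && W a (wlo u) (whi u) (c u) v : nat))
   <= \sum_(glo <= u < ghi) ((whi u - wlo u) + a).
Proof.
move=> a0; rewrite big_distrr /=.
apply: leq_trans (sum_gate K glo ghi (fun u => (whi u - wlo u) + a)).
apply: leq_sum => u _.
rewrite (eq_bigr (fun v : 'I_K => (glo <= u < ghi) * (W a (wlo u) (whi u) (c u) v : nat))); last first.
  by move=> v _; rewrite mulnb.
rewrite -big_distrr /= mulnCA leq_mul2l; apply/orP; right.
exact: winB.
Qed.

Lemma or4_le (b1 b2 b3 b4 : bool) : ([|| b1, b2, b3 | b4] : nat) <= b1 + b2 + b3 + b4.
Proof. by case: b1; case: b2; case: b3; case: b4. Qed.

Definition kB a m := 4 * (a + 1) * m.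
Definition hB a m := 2 * a * (a + 4) * m.
Definition NB a m := a ^ 2 * (a + 4) * m.

Lemma block_count a m n : 4 <= a -> n <= NB a m ->
  a * mu_xyaz a [ffun x : 'I_n => (x.+1 <= kB a m) || (hB a m < x.+1)] <=
  \sum_(0 <= u < kB a m) ((kB a m - 0) + a) +
  2 * \sum_(0 <= u < kB a m) ((a * kB a m - u.+1 - hB a m) + a) +
  \sum_(kB a m <= u < hB a m) ((hB a m - maxn (kB a m) (a * kB a m - u.+1)) + a).
Proof.
move=> a4 nN.
set k := kB a m; set h := hB a m; set N := NB a m.
have a0 : 0 < a by lia.
have eh : a * h = 2 * N by rewrite /h /N /hB /NB; nia.
have ek : a * k <= 2 * h.
  rewrite /h /k /hB /kB; nia.
have H0 := @mu_le a n (fun X => (X <= k) || (h < X)) N predn succn (QB a k h) a0.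
lapply H0; last first.
  move=> [|x] [|y] Z //= hX hY hZ e c1 c2.
  rewrite !ltnS in c1 c2.
  split => //; try lia.
  apply: (@block_Q a k h N x y Z) => //; lia.
move=> H; rewrite -/k -/h in H *.
apply: leq_trans (leq_mul (leqnn a) H) _.
pose A1 u v := ((0 <= u < k) && W a 0 k u.+1 v : nat).
pose A2 u v := ((0 <= u < k) && W a h (a*k - u.+1) u.+1 v : nat).
pose A3 u v := ((k <= u < h) && W a (maxn k (a*k - u.+1)) h u.+1 v : nat).
have H2 : \sum_(u < N.+1) \sum_(v < N.+1) (QB a k h u v : nat) <=
  \sum_(u < N.+1) \sum_(v < N.+1) A1 u v + \sum_(u < N.+1) \sum_(v < N.+1) A2 u v +
  \sum_(u < N.+1) \sum_(v < N.+1) A2 v u + \sum_(u < N.+1) \sum_(v < N.+1) A3 u v.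
  rewrite -!big_split /=; apply: leq_sum => u _; rewrite -!big_split /=.
  by apply: leq_sum => v _; exact: or4_le.
have ex : \sum_(u < N.+1) \sum_(v < N.+1) A2 v u = \sum_(u < N.+1) \sum_(v < N.+1) A2 u v.
  by rewrite exchange_big.
rewrite ex in H2.
apply: leq_trans (leq_mul (leqnn a) H2) _.
have p1 := piece N.+1 0 k (fun _ => 0) (fun _ => k) (fun u => u.+1) a0.
have p2 := piece N.+1 0 k (fun _ => h) (fun u => a * k - u.+1) (fun u => u.+1) a0.
have p3 := piece N.+1 k h (fun u => maxn k (a * k - u.+1)) (fun _ => h) (fun u => u.+1) a0.
rewrite !mulnDr.
move: p1 p2 p3; rewrite /A1 /A2 /A3 /=.
lia.
Qed.


Lemma rhs_eval a m : 4 <= a ->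
  2 * (\sum_(0 <= u < kB a m) ((kB a m - 0) + a) +
  2 * \sum_(0 <= u < kB a m) ((a * kB a m - u.+1 - hB a m) + a) +
  \sum_(kB a m <= u < hB a m) ((hB a m - maxn (kB a m) (a * kB a m - u.+1)) + a))
  <= 2 * a * (8 * (2 * a - 1) * (a + 4) * m ^ 2 + (2 * a ^ 2 + 16 * a + 10) * m).
Proof.
move=> a4; set k := kB a m; set h := hB a m.
set d := a * k - h.
have ed : d = 2 * a * (a - 2) * m by rewrite /d /k /h /kB /hB; nia.
have R1 : \sum_(0 <= u < k) ((k - 0) + a) = k * (k + a) by rewrite sum_nat_const_nat subn0.
have R2 : \sum_(0 <= u < k) ((a * k - u.+1 - h) + a) = \sum_(0 <= u < k) (d - u.+1) + k * a.
  rewrite big_split /= sum_nat_const_nat subn0; congr (_ + _).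
  by apply: eq_bigr => u _; rewrite subnAC.
rewrite R1 R2 {R1 R2}.
rewrite big_split /= sum_nat_const_nat.
have [a5|a4'] := leqP 5 a.
  have [c ec] : exists c, a = c + 5 by exists (a - 5); lia.
  have ek : k = 4 * (c + 6) * m by rewrite /k /kB ec; lia.
  have eh : h = k + 2 * (c * c + 12 * c + 33) * m by rewrite /h /hB ek ec; lia.
  have ed' : d = 2 * (c + 5) * (c + 3) * m by rewrite ed ec; lia.
  have hk : h + k <= a * k.
    rewrite eh ek ec. nia.
  have E3 : \sum_(k <= u < h) (h - maxn k (a * k - u.+1)) = \sum_(k <= u < h) (u.+1 - d).
    apply: eq_big_nat => u /andP[hu1 hu2]; rewrite /d; lia.
  have kh : k <= h by lia.
  have L3 : \sum_(k <= u < h) (u.+1 - d) <= \sum_(0 <= u < h) (u.+1 - d).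
    by rewrite (big_cat_nat (leq0n k) kh) /= leq_addl.
  have T1 := sumT1 h d.
  have kd : k <= d by rewrite /d; lia.
  have T2 := sumT2 kd.
  rewrite E3.
  set S2 := \sum_(0 <= u < k) (d - u.+1) in T2 *.
  set S3 := \sum_(k <= u < h) (u.+1 - d) in L3 *.
  set S3' := \sum_(0 <= u < h) (u.+1 - d) in L3 T1 *.
  have hd : h - d = 12 * (c + 5) * m by rewrite eh ed' ek; lia.
  have hk' : h - k = 2 * (c * c + 12 * c + 33) * m by rewrite eh; lia.
  rewrite hd in T1; rewrite hk'.
  move: T1 T2 L3; rewrite ed' ek ec.
  rewrite (_ : 2 * (c + 5) - 1 = 2 * c + 9); last by lia.
  nia.
have ea : a = 4 by lia.
subst a.
have ek : k = 20 * m by rewrite /k /kB; lia.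
have eh : h = 64 * m by rewrite /h /hB; lia.
have ed4 : d = 16 * m by rewrite ed; lia.
rewrite ed4 ek eh.
have dk : 16 * m <= 20 * m by lia.
have S2e : \sum_(0 <= u < 20 * m) (16 * m - u.+1) = \sum_(0 <= u < 16 * m) (16 * m - u.+1).
  have Z : \sum_(16 * m <= u < 20 * m) (16 * m - u.+1) = 0.
    by rewrite big_nat_cond; apply: big1 => u /andP[/andP[hu _] _]; lia.
  by rewrite (big_cat_nat (leq0n _) dk) /= Z addn0.
have T2 := sumT2 (leqnn (16 * m)).
have e1 : 20 * m <= 60 * m by lia.
have e2 : 60 * m <= 64 * m by lia.
rewrite (big_cat_nat e1 e2) /=.
have E3a : \sum_(20 * m <= u < 60 * m) (64 * m - maxn (20 * m) (4 * (20 * m) - u.+1)) =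
          \sum_(20 * m <= u < 60 * m) (u.+1 - 16 * m).
  by apply: eq_big_nat => u /andP[hu1 hu2]; lia.
have E3b : \sum_(60 * m <= u < 64 * m) (64 * m - maxn (20 * m) (4 * (20 * m) - u.+1)) =
          \sum_(60 * m <= u < 64 * m) (44 * m).
  by apply: eq_big_nat => u /andP[hu1 hu2]; lia.
rewrite E3a E3b sum_nat_const_nat S2e.
have Sc : \sum_(0 <= u < 60 * m) (u.+1 - 16 * m) =
   \sum_(0 <= u < 20 * m) (u.+1 - 16 * m) + \sum_(20 * m <= u < 60 * m) (u.+1 - 16 * m).
  by rewrite (big_cat_nat (leq0n _) e1).
have T1a := sumT1 (60 * m) (16 * m).
have T1b := sumT1 (20 * m) (16 * m).
rewrite (_ : 60 * m - 16 * m = 44 * m) in T1a; last by lia.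
rewrite (_ : 20 * m - 16 * m = 4 * m) in T1b; last by lia.
move: T1a T1b T2 Sc.
set A := \sum_(0 <= u < 16 * m) _.
set B := \sum_(0 <= u < 60 * m) _.
set C := \sum_(0 <= u < 20 * m) _.
set D := \sum_(20 * m <= u < 60 * m) _.
nia.
Qed.

Definition col5 m X := if 5 %| X then X %/ 5 <= 2 * m else X %% 5 <= 2.

Definition Q5 P N u v :=
  [|| (0 <= u < P) && W 5 0 P u.+1 v, (0 <= u < P) && W 5 0 P (u.+1 + 4) v,
      (0 <= u < P) && W 5 0 P (u.+1 + 3) v, (P <= u < N) && W 5 P N (u.+1 + 2) v |
      (P <= u < N) && W 5 P N (u.+1 + 1) v].

Lemma dvd_ex d x : (exists q, x = q * d) -> d %| x.
Proof. by move=> [q ->]; rewrite dvdn_mull. Qed.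

Lemma res5_Q m X Y Z : 0 < X <= 25 * m -> 0 < Y <= 25 * m -> X + Y = 5 * Z ->
  col5 m X = col5 m Y -> col5 m Y = col5 m Z ->
  [/\ (X %/ 5).-1 <= 5 * m, (Y %/ 5).-1 <= 5 * m, 5 * (X %/ 5).-1.+1 = X,
      5 * (Y %/ 5).-1.+1 = Y & Q5 (2 * m) (5 * m) (X %/ 5).-1 (Y %/ 5).-1].
Proof.
move=> hX hY e c1 c2.
have eX := divn_eq X 5; have eY := divn_eq Y 5; have eZ := divn_eq Z 5.
have rX := ltn_pmod X (isT : 0 < 5); have rY := ltn_pmod Y (isT : 0 < 5).
have rZ := ltn_pmod Z (isT : 0 < 5).
move: c1 c2; rewrite /col5 /dvdn.
set U := X %/ 5; set V := Y %/ 5; set q := Z %/ 5.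
set x := X %% 5; set y := Y %% 5; set r := Z %% 5.
move=> c1 c2.
have x0 : x = 0.
  move: c1; case: ifP => hx; case: ifP => hy; lia.
have y0 : y = 0 by lia.
rewrite x0 y0 /= in c1 c2 *.
have U1 : 0 < U by lia.
have V1 : 0 < V by lia.
have ZUV : Z = U + V by lia.
rewrite !prednK //.
split; try lia.
rewrite /Q5 /W !prednK //.
have [vs|vl] := leqP V (2 * m).
  have us : U <= 2 * m by rewrite vs in c1.
  rewrite vs in c2.
  have hr : r <= 2 by move: c2; case: eqP => hr //; lia.
  have : r = 0 \/ r = 1 \/ r = 2 by lia.
  case=> [r0|[r1|r2]].
  - have d : 5 %| U + V by apply: dvd_ex; exists q; lia.
    by apply/orP; left; rewrite d; repeat (apply/andP; split); try done; lia.
  - have d : 5 %| U + 4 + V by apply: dvd_ex; exists q.+1; lia.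
    by apply/orP; right; apply/orP; left; rewrite d; repeat (apply/andP; split); try done; lia.
  - have d : 5 %| U + 3 + V by apply: dvd_ex; exists q.+1; lia.
    by apply/orP; right; apply/orP; right; apply/orP; left; rewrite d; repeat (apply/andP; split); try done; lia.
have vs : (V <= 2 * m) = false by apply/negbTE; rewrite -ltnNge.
have ul : 2 * m < U by rewrite vs in c1; move/negbT: c1; rewrite -ltnNge.
rewrite vs in c2.
have hr : 3 <= r.
  move: c2; case: eqP => hr; last lia.
  move/esym/negbT; rewrite -ltnNge => hq; lia.
have : r = 3 \/ r = 4 by lia.
case=> [r3|r4].
- have d : 5 %| U + 2 + V by apply: dvd_ex; exists q.+1; lia.
  by apply/orP; right; apply/orP; right; apply/orP; right; apply/orP; left; rewrite d; repeat (apply/andP; split); try done; lia.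
- have d : 5 %| U + 1 + V by apply: dvd_ex; exists q.+1; lia.
  by apply/orP; right; apply/orP; right; apply/orP; right; apply/orP; right; rewrite d; repeat (apply/andP; split); try done; lia.
Qed.

Lemma or5_le (b1 b2 b3 b4 b5 : bool) : ([|| b1, b2, b3, b4 | b5] : nat) <= b1 + b2 + b3 + b4 + b5.
Proof. by case: b1; case: b2; case: b3; case: b4; case: b5. Qed.

Lemma count5 m n : n <= 25 * m ->
  5 * mu_xyaz 5 [ffun x : 'I_n => col5 m x.+1] <= 30 * m ^ 2 + 60 * m.
Proof.
move=> nN.
have H0 := @mu_le 5 n (col5 m) (5 * m) (fun X => (X %/ 5).-1) (fun u => 5 * u.+1) (Q5 (2 * m) (5 * m)) isT.
lapply H0; last first.
  move=> X Y Z hX hY hZ e c1 c2.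
  have [h1 h2 h3 h4 h5] := @res5_Q m X Y Z ltac:(lia) ltac:(lia) e c1 c2.
  by split.
move=> H {H0}.
set K := (5 * m).+1 in H.
set P := 2 * m; set N := 5 * m.
pose B1 u v := ((0 <= u < P) && W 5 0 P u.+1 v : nat).
pose B2 u v := ((0 <= u < P) && W 5 0 P (u.+1 + 4) v : nat).
pose B3 u v := ((0 <= u < P) && W 5 0 P (u.+1 + 3) v : nat).
pose B4 u v := ((P <= u < N) && W 5 P N (u.+1 + 2) v : nat).
pose B5 u v := ((P <= u < N) && W 5 P N (u.+1 + 1) v : nat).
have H2 : \sum_(u < K) \sum_(v < K) (Q5 P N u v : nat) <=
  \sum_(u < K) \sum_(v < K) B1 u v + \sum_(u < K) \sum_(v < K) B2 u v +
  \sum_(u < K) \sum_(v < K) B3 u v + \sum_(u < K) \sum_(v < K) B4 u v +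
  \sum_(u < K) \sum_(v < K) B5 u v.
  rewrite -!big_split /=; apply: leq_sum => u _; rewrite -!big_split /=.
  by apply: leq_sum => v _; exact: or5_le.
apply: leq_trans (leq_mul (leqnn 5) (leq_trans H H2)) _.
have p1 := piece K 0 P (fun _ => 0) (fun _ => P) (fun u => u.+1) (isT : 0 < 5).
have p2 := piece K 0 P (fun _ => 0) (fun _ => P) (fun u => u.+1 + 4) (isT : 0 < 5).
have p3 := piece K 0 P (fun _ => 0) (fun _ => P) (fun u => u.+1 + 3) (isT : 0 < 5).
have p4 := piece K P N (fun _ => P) (fun _ => N) (fun u => u.+1 + 2) (isT : 0 < 5).
have p5 := piece K P N (fun _ => P) (fun _ => N) (fun u => u.+1 + 1) (isT : 0 < 5).
rewrite !sum_nat_const_nat in p1 p2 p3 p4 p5.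
rewrite !mulnDr.
move: p1 p2 p3 p4 p5; rewrite /B1 /B2 /B3 /B4 /B5 /P /N /=.
nia.
Qed.


Definition c3 m U := (U <= 2 * m) || (6 * m < U).
Definition col3 m X := if 3 %| X then c3 m (X %/ 3) else X %% 3 == 1.

Definition Q3 m u v :=
  [|| (0 <= u < 2 * m) && W 3 0 (2 * m) (u.+1 + 2) v,
      (6 * m <= u < 9 * m) && W 3 0 (2 * m) (u.+1 + 2) v,
      (0 <= u < 2 * m) && W 3 (6 * m) (9 * m) (u.+1 + 2) v,
      (6 * m <= u < 9 * m) && W 3 (6 * m) (9 * m) (u.+1 + 2) v,
      (0 <= u < 2 * m) && W 3 0 (2 * m) u.+1 v,
      (2 * m <= u < 6 * m) && W 3 (2 * m) (6 * m) (u.+1 + 1) v |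
      (2 * m <= u < 6 * m) && W 3 (maxn (2 * m) (6 * m - u.+1)) (6 * m) u.+1 v].

Lemma res3_Q m X Y Z : 0 < X <= 27 * m -> 0 < Y <= 27 * m -> X + Y = 3 * Z ->
  col3 m X = col3 m Y -> col3 m Y = col3 m Z ->
  [/\ (X %/ 3).-1 <= 9 * m, (Y %/ 3).-1 <= 9 * m, 3 * (X %/ 3).-1.+1 = X,
      3 * (Y %/ 3).-1.+1 = Y & Q3 m (X %/ 3).-1 (Y %/ 3).-1].
Proof.
move=> hX hY e c1 c2.
have eX := divn_eq X 3; have eY := divn_eq Y 3; have eZ := divn_eq Z 3.
have rX := ltn_pmod X (isT : 0 < 3); have rY := ltn_pmod Y (isT : 0 < 3).
have rZ := ltn_pmod Z (isT : 0 < 3).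
move: c1 c2; rewrite /col3 /c3 /dvdn.
set U := X %/ 3; set V := Y %/ 3; set q := Z %/ 3.
set x := X %% 3; set y := Y %% 3; set r := Z %% 3.
move=> c1 c2.
have x0 : x = 0.
  move: c1; case: ifP => hx; case: ifP => hy; try lia.
have y0 : y = 0 by lia.
rewrite x0 y0 /= in c1 c2 *.
have U1 : 0 < U by lia.
have V1 : 0 < V by lia.
have ZUV : Z = U + V by lia.
rewrite !prednK //.
split; try lia.
rewrite /Q3 /W !prednK //.
have [vA|vB] := boolP ((V <= 2 * m) || (6 * m < V)).
  rewrite vA in c2.
  have uA : (U <= 2 * m) || (6 * m < U) by rewrite vA in c1.
  move: c2; case: eqP => hr c2.
  -
    have c2' : (q <= 2 * m) || (6 * m < q) by rewrite -c2.
    have us : U <= 2 * m /\ V <= 2 * m.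
      move: uA vA c2'; case/orP => hu; case/orP => hv; case/orP => hq; lia.
    have d : 3 %| U + V by apply: dvd_ex; exists q; lia.
    apply/orP; right; apply/orP; right; apply/orP; right; apply/orP; right; apply/orP; left.
    by rewrite d; repeat (apply/andP; split); try done; lia.
  - have r1 : r = 1 by move/eqP: c2; lia.
    have d : 3 %| U + 2 + V by apply: dvd_ex; exists q.+1; lia.
    move: uA vA; case/orP => hu; case/orP => hv.
    + by apply/orP; left; rewrite d; repeat (apply/andP; split); try done; lia.
    + by apply/orP; right; apply/orP; right; apply/orP; left; rewrite d; repeat (apply/andP; split); try done; lia.
    + by apply/orP; right; apply/orP; left; rewrite d; repeat (apply/andP; split); try done; lia.
    + by apply/orP; right; apply/orP; right; apply/orP; right; apply/orP; left; rewrite d; repeat (apply/andP; split); try done; lia.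
have vB' := negbTE vB.
rewrite vB' in c1 c2.
have uB : 2 * m < U <= 6 * m by move/negbT: c1; case/norP; rewrite -ltnNge -leqNgt => ??; lia.
have vB2 : 2 * m < V <= 6 * m by case/norP: vB; rewrite -ltnNge -leqNgt => ??; lia.
move: c2; case: eqP => hr c2.
- have hq : 2 * m < q by move: c2 => /esym/negbT/norP[]; rewrite -ltnNge; lia.
  have d : 3 %| U + V by apply: dvd_ex; exists q; lia.
  apply/orP; right; apply/orP; right; apply/orP; right; apply/orP; right; apply/orP; right; apply/orP; right.
  by rewrite d; repeat (apply/andP; split); try done; lia.
- have r2 : r = 2 by move/esym/negbT: c2; lia.
  have d : 3 %| U + 1 + V by apply: dvd_ex; exists q.+1; lia.
  apply/orP; right; apply/orP; right; apply/orP; right; apply/orP; right; apply/orP; right; apply/orP; left.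
  by rewrite d; repeat (apply/andP; split); try done; lia.
Qed.

Lemma or7_le (b1 b2 b3 b4 b5 b6 b7 : bool) :
  ([|| b1, b2, b3, b4, b5, b6 | b7] : nat) <= b1 + b2 + b3 + b4 + b5 + b6 + b7.
Proof. by case: b1; case: b2; case: b3; case: b4; case: b5; case: b6; case: b7. Qed.

Lemma count3 m n : n <= 27 * m ->
  3 * mu_xyaz 3 [ffun x : 'I_n => col3 m x.+1] <= 59 * m ^ 2 + 61 * m.
Proof.
move=> nN.
have H0 := @mu_le 3 n (col3 m) (9 * m) (fun X => (X %/ 3).-1) (fun u => 3 * u.+1) (Q3 m) isT.
lapply H0; last first.
  move=> X Y Z hX hY hZ e c1 c2.
  have [h1 h2 h3 h4 h5] := @res3_Q m X Y Z ltac:(lia) ltac:(lia) e c1 c2.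
  by split.
move=> H {H0}.
set K := (9 * m).+1 in H.
pose B1 u v := ((0 <= u < 2 * m) && W 3 0 (2 * m) (u.+1 + 2) v : nat).
pose B2 u v := ((6 * m <= u < 9 * m) && W 3 0 (2 * m) (u.+1 + 2) v : nat).
pose B3 u v := ((0 <= u < 2 * m) && W 3 (6 * m) (9 * m) (u.+1 + 2) v : nat).
pose B4 u v := ((6 * m <= u < 9 * m) && W 3 (6 * m) (9 * m) (u.+1 + 2) v : nat).
pose B5 u v := ((0 <= u < 2 * m) && W 3 0 (2 * m) u.+1 v : nat).
pose B6 u v := ((2 * m <= u < 6 * m) && W 3 (2 * m) (6 * m) (u.+1 + 1) v : nat).
pose B7 u v := ((2 * m <= u < 6 * m) && W 3 (maxn (2 * m) (6 * m - u.+1)) (6 * m) u.+1 v : nat).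
have H2 : \sum_(u < K) \sum_(v < K) (Q3 m u v : nat) <=
  \sum_(u < K) \sum_(v < K) B1 u v + \sum_(u < K) \sum_(v < K) B2 u v +
  \sum_(u < K) \sum_(v < K) B3 u v + \sum_(u < K) \sum_(v < K) B4 u v +
  \sum_(u < K) \sum_(v < K) B5 u v + \sum_(u < K) \sum_(v < K) B6 u v +
  \sum_(u < K) \sum_(v < K) B7 u v.
  rewrite -!big_split /=; apply: leq_sum => u _; rewrite -!big_split /=.
  by apply: leq_sum => v _; exact: or7_le.
apply: leq_trans (leq_mul (leqnn 3) (leq_trans H H2)) _.
have p1 := piece K 0 (2 * m) (fun _ => 0) (fun _ => 2 * m) (fun u => u.+1 + 2) (isT : 0 < 3).
have p2 := piece K (6 * m) (9 * m) (fun _ => 0) (fun _ => 2 * m) (fun u => u.+1 + 2) (isT : 0 < 3).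
have p3 := piece K 0 (2 * m) (fun _ => 6 * m) (fun _ => 9 * m) (fun u => u.+1 + 2) (isT : 0 < 3).
have p4 := piece K (6 * m) (9 * m) (fun _ => 6 * m) (fun _ => 9 * m) (fun u => u.+1 + 2) (isT : 0 < 3).
have p5 := piece K 0 (2 * m) (fun _ => 0) (fun _ => 2 * m) (fun u => u.+1) (isT : 0 < 3).
have p6 := piece K (2 * m) (6 * m) (fun _ => 2 * m) (fun _ => 6 * m) (fun u => u.+1 + 1) (isT : 0 < 3).
have p7 := piece K (2 * m) (6 * m) (fun u => maxn (2 * m) (6 * m - u.+1)) (fun _ => 6 * m) (fun u => u.+1) (isT : 0 < 3).
rewrite !sum_nat_const_nat in p1 p2 p3 p4 p5 p6.
rewrite big_split /= sum_nat_const_nat in p7.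
have e1 : 2 * m <= 4 * m by lia.
have e2 : 4 * m <= 6 * m by lia.
rewrite (big_cat_nat e1 e2) /= in p7.
have E1 : \sum_(2 * m <= u < 4 * m) (6 * m - maxn (2 * m) (6 * m - u.+1)) =
          \sum_(2 * m <= u < 4 * m) (u.+1 - 0).
  by apply: eq_big_nat => u /andP[hu1 hu2]; lia.
have E2 : \sum_(4 * m <= u < 6 * m) (6 * m - maxn (2 * m) (6 * m - u.+1)) =
          \sum_(4 * m <= u < 6 * m) (4 * m).
  by apply: eq_big_nat => u /andP[hu1 hu2]; lia.
rewrite E1 E2 sum_nat_const_nat in p7.
have Sc : \sum_(0 <= u < 4 * m) (u.+1 - 0) =
   \sum_(0 <= u < 2 * m) (u.+1 - 0) + \sum_(2 * m <= u < 4 * m) (u.+1 - 0).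
  by rewrite (big_cat_nat (leq0n _) e1).
have T1a := sumT1 (4 * m) 0.
have T1b := sumT1 (2 * m) 0.
rewrite !subn0 in T1a T1b.
rewrite !mulnDr.
move: p1 p2 p3 p4 p5 p6 p7 T1a T1b Sc; rewrite /B1 /B2 /B3 /B4 /B5 /B6 /B7 /=.
set S1 := \sum_(0 <= u < 4 * m) _.
set S2 := \sum_(0 <= u < 2 * m) (u.+1 - 0).
set S3 := \sum_(2 * m <= u < 4 * m) _.
nia.
Qed.


Lemma block_mu a m n : 4 <= a -> n <= NB a m ->
  mu_xyaz a [ffun x : 'I_n => (x.+1 <= kB a m) || (hB a m < x.+1)] <=
  8 * (2 * a - 1) * (a + 4) * m ^ 2 + (2 * a ^ 2 + 16 * a + 10) * m.
Proof.
move=> a4 nN.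
have h1 := block_count a4 nN.
have h2 := rhs_eval m a4.
have : 2 * a * mu_xyaz a [ffun x : 'I_n => (x.+1 <= kB a m) || (hB a m < x.+1)] <=
   2 * a * (8 * (2 * a - 1) * (a + 4) * m ^ 2 + (2 * a ^ 2 + 16 * a + 10) * m).
  rewrite -mulnA; apply: leq_trans h2; rewrite leq_mul2l /=; exact: h1.
by rewrite leq_pmul2l //; lia.
Qed.

Lemma fin (M n : nat) (P Dr C : rat) : (0 < Dr)%R ->
  (M%:R * Dr <= P + C * Dr * n%:R)%R -> (M%:R <= P / Dr + C * n%:R)%R.
Proof.
move=> hD h.
have -> : (P / Dr + C * n%:R = (P + C * Dr * n%:R) / Dr)%R.
  by field; rewrite gt_eqF.
by rewrite ler_pdivlMr.
Qed.

Lemma M_monoB a n : 4 <= a -> 0 < n ->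
  a ^ 4 * (a + 4) * M_xyaz a n <=
  8 * (2 * a - 1) * n ^ 2 +
  (8 * (2 * a - 1) * (2 * (a ^ 2 * (a + 4)) + (a ^ 2 * (a + 4)) ^ 2) +
   a ^ 4 * (a + 4) * (2 * a ^ 2 + 16 * a + 10)) * n.
Proof.
move=> a4 n0.
set L := a ^ 2 * (a + 4).
have L2 : 2 <= L by rewrite /L; nia.
set m := n %/ L + 1.
have hm1 : n <= L * m.
  have := ltn_ceil n (ltnW L2); rewrite /m; lia.
have hm2 : L * m <= n + L.
  have := leq_divM n L; rewrite /m; lia.
have hm3 : m <= n.
  have := leq_divM n L; rewrite /m => h.
  have : n %/ L * 2 <= n %/ L * L by rewrite leq_mul2l L2 orbT.
  lia.
have nN : n <= NB a m by rewrite /NB -/L.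
have hmu := block_mu a4 nN.
have hM := @M_le a n [ffun x : 'I_n => (x.+1 <= kB a m) || (hB a m < x.+1)].
set D := a ^ 4 * (a + 4).
set t := 2 * a - 1.
set c1 := 2 * a ^ 2 + 16 * a + 10.
set mu := mu_xyaz _ _ in hmu hM.
have s1 : D * M_xyaz a n <= D * (8 * t * (a + 4) * m ^ 2 + c1 * m).
  by rewrite leq_mul2l; apply/orP; right; apply: leq_trans hM hmu.
have s2 : D * (8 * t * (a + 4) * m ^ 2) = 8 * t * (L * m) ^ 2.
  rewrite /D /L; ring.
have s3 : (L * m) ^ 2 <= (n + L) ^ 2 by rewrite leq_exp2r.
have s4 : (n + L) ^ 2 <= n ^ 2 + (2 * L + L ^ 2) * n.
  have : L ^ 2 <= L ^ 2 * n by rewrite leq_pmulr.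
  rewrite sqrnD mulnDl; lia.
have s5 : D * (c1 * m) <= D * (c1 * n) by rewrite !leq_mul2l hm3 !orbT.
have s6 : 8 * t * (L * m) ^ 2 <= 8 * t * (n ^ 2 + (2 * L + L ^ 2) * n).
  by rewrite leq_mul2l (leq_trans s3 s4) orbT.
rewrite mulnDr s2 in s1.
apply: leq_trans (leq_trans s1 (leq_add s6 s5)) _.
apply: eq_leq; rewrite /D /t /L /c1; ring.
Qed.

Lemma M_mono3 n : 0 < n -> 36 * M_xyaz 3 n <= n ^ 2 + 1515 * n.
Proof.
move=> n0.
set m := n %/ 27 + 1.
have hm1 : n <= 27 * m by have := ltn_ceil n (isT : 0 < 27); rewrite /m; lia.
have hm2 : 27 * m <= n + 27 by have := leq_divM n 27; rewrite /m; lia.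
have hm3 : m <= n by have := leq_divM n 27; rewrite /m; lia.
have hmu := count3 hm1.
have hM := @M_le 3 n [ffun x : 'I_n => col3 m x.+1].
have s3 : (27 * m) ^ 2 <= (n + 27) ^ 2 by rewrite leq_exp2r.
have s4 : (n + 27) ^ 2 <= n ^ 2 + 783 * n by rewrite sqrnD; lia.
have s5 : 708 * m ^ 2 <= (27 * m) ^ 2 by rewrite expnMn leq_mul2r orbT.
lia.
Qed.

Lemma M_mono5 n : 0 < n -> 100 * M_xyaz 5 n <= n ^ 2 + 1875 * n.
Proof.
move=> n0.
set m := n %/ 25 + 1.
have hm1 : n <= 25 * m by have := ltn_ceil n (isT : 0 < 25); rewrite /m; lia.
have hm2 : 25 * m <= n + 25 by have := leq_divM n 25; rewrite /m; lia.
have hm3 : m <= n by have := leq_divM n 25; rewrite /m; lia.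
have hmu := count5 hm1.
have hM := @M_le 5 n [ffun x : 'I_n => col5 m x.+1].
have s3 : (25 * m) ^ 2 <= (n + 25) ^ 2 by rewrite leq_exp2r.
have s4 : (n + 25) ^ 2 <= n ^ 2 + 675 * n by rewrite sqrnD; lia.
have s5 : 600 * m ^ 2 <= (25 * m) ^ 2 by rewrite expnMn leq_mul2r orbT.
lia.
Qed.



Local Open Scope ring_scope.

Lemma fin_i (M n a E : nat) : (0 < a)%N -> (4 * a ^ 2 * M <= n ^ 2 + E * n)%N ->
  (M%:R : rat) <= (n ^ 2)%:R / (4 * (a ^ 2)%:R) + (E%:R / (4 * a ^ 2)%:R) * n%:R.
Proof.
move=> a0 h.
have Dp : (0 : rat) < (4 * a ^ 2)%:R by rewrite ltr0n; nia.
have e : 4 * (a ^ 2)%:R = (4 * a ^ 2)%:R :> rat by rewrite natrM.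
rewrite e; apply: fin => //.
rewrite divfK ?gt_eqF //.
move: h; rewrite -(ler_nat rat) natrD !natrM => h.
set x := (4 * a ^ 2)%:R in Dp e h *.
rewrite -natrM in h.
lra.
Qed.

Lemma fin_ii (M n a E : nat) : (0 < a)%N ->
  (a ^ 4 * (a + 4) * M <= 8 * (2 * a - 1) * n ^ 2 + E * n)%N ->
  (M%:R : rat) <= 8 * (2 * a%:R - 1) * (n ^ 2)%:R / ((a ^ 4)%:R * (4 + a%:R)) +
     (E%:R / (a ^ 4 * (a + 4))%:R) * n%:R.
Proof.
move=> a0 h.
have Dp : (0 : rat) < (a ^ 4 * (a + 4))%:R by rewrite ltr0n; nia.
have e : (a ^ 4)%:R * (4 + a%:R) = (a ^ 4 * (a + 4))%:R :> rat by rewrite natrM natrD addrC.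
rewrite e; apply: fin => //.
rewrite divfK ?gt_eqF //.
move: h; rewrite -(ler_nat rat) natrD !natrM natrB; last by lia.
rewrite natrM => h.
set x := (a ^ 4 * (a + 4))%:R in Dp e h *.
rewrite -!natrM in h.
lra.
Qed.

Theorem theorem3 (a : nat) (ha : (3 <= a)%N) :
  exists C : rat, forall n : nat, (0 < n)%N ->
    ((a == 3%N) || (a == 5%N) ->
       (M_xyaz a n)%:R <= (n ^ 2)%:R / (4 * (a ^ 2)%:R) + C * n%:R) /\
    ((a == 4%N) || (6 <= a)%N ->
       (M_xyaz a n)%:R <=
         8 * (2 * a%:R - 1) * (n ^ 2)%:R / ((a ^ 4)%:R * (4 + a%:R)) + C * n%:R).
Proof.
pose E := (8 * (2 * a - 1) * (2 * (a ^ 2 * (a + 4)) + (a ^ 2 * (a + 4)) ^ 2) +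
   a ^ 4 * (a + 4) * (2 * a ^ 2 + 16 * a + 10))%N.
exists (if a == 3%N then 1515%:R / (4 * 3 ^ 2)%:R
        else if a == 5%N then 1875%:R / (4 * 5 ^ 2)%:R
        else E%:R / (a ^ 4 * (a + 4))%:R).
move=> n n0; split.
  case/orP => /eqP ea; subst a.
    rewrite eqxx; apply: fin_i => //.
    by rewrite (_ : (4 * 3 ^ 2)%N = 36%N) //; exact: M_mono3.
  rewrite (_ : (5 == 3)%N = false) // eqxx; apply: fin_i => //.
  by rewrite (_ : (4 * 5 ^ 2)%N = 100%N) //; exact: M_mono5.
move=> ha4.
have a4 : (4 <= a)%N by case/orP: ha4 => [/eqP->|]; lia.
have ne3 : (a == 3%N) = false by apply/eqP; lia.
have ne5 : (a == 5%N) = false by apply/eqP; case/orP: ha4 => [/eqP->|]; lia.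
rewrite ne3 ne5; apply: fin_ii; first by lia.
exact: M_monoB.
Qed.
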